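(* In the click-through auction setting with $n\ge 2$ bidders, suppose the environment is symmetric, i.e. the random variables $v_1r_1,\dots,v_nr_n$ (with $r\sim G$, $G$ of finite support) are exchangeable. Then for every $\varepsilon>0$ there exists a calibrated (correlated) information structure whose revenue is at least $\mathbb{E}[\max_i v_ir_i]-\varepsilon$.
   Context: Setting. There are $n\ge 2$ bidders; bidder $i$ has a known value per click $v_i\ge 0$. A vector of click-through rates (CTRs) $r=(r_1,\dots,r_n)\in[0,1]^n$ is drawn from a prior distribution $G$ with finite support (mass function $g$). An information structure is a probability distribution $x$ with finite support on pairs $(r,s)\in[0,1]^n\times[0,1]^n$ with $\sum_s x(r,s)=g(r)$ for all $r$. Given signals $s$, the winner $i^*$ is a bidder maximizing $v_is_i$, ties broken uniformly at random; the price per click is $p_{i^*}=\max_{j\neq i^*}v_js_j/s_{i^*}$ (revenue $0$ if $s_{i^*}=0$), paid only upon a click, which occurs with probability $r_{i^*}$. Revenue is $\mathbb{E}[r_{i^*}p_{i^*}]$. Calibrated: $\mathbb{E}[r_i\mid s_i=t]=t$ for every $i$ and every $t$ with $\Pr[s_i=t]>0$. Independent: $\mathbb{E}[r_i\mid s]=\mathbb{E}[r_i\mid s_i]$ for all $i$ and all $s$ in the support; correlated means not independent. The quantity $\mathbb{E}[\max_iv_ir_i]$ is the (full) social surplus. *)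

(* Defs.v *)
From HB Require Import structures.
From mathcomp Require Import all_boot all_order all_algebra all_fingroup.
From mathcomp Require Import reals.
Set Implicit Arguments. Unset Strict Implicit. Unset Printing Implicit Defensive.
Import Order.TTheory GRing.Theory Num.Theory.
Local Open Scope ring_scope.

Definition vecR (R : realType) (n : nat) := {ffun 'I_n -> R}.

(* A finitely supported distribution is a list of (point, weight) pairs;
   the mass of a point is the total weight of its entries. *)
Definition prior (R : realType) (n : nat) := seq (vecR R n * R).
Definition infostruct (R : realType) (n : nat) := seq ((vecR R n * vecR R n) * R).

Definition in01 (R : realType) (n : nat) (r : vecR R n) : bool :=
  [forall i, (0 <= r i) && (r i <= 1)].

Definition is_prior (R : realType) (n : nat) (G : prior R n) : Prop :=
  all (fun p => (0 <= p.2) && in01 p.1) G /\ \sum_(p <- G) p.2 = 1.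

Definition gmass (R : realType) (n : nat) (G : prior R n) (r : vecR R n) : R :=
  \sum_(p <- G | p.1 == r) p.2.

Definition is_info_structure (R : realType) (n : nat) (G : prior R n)
    (x : infostruct R n) : Prop :=
  all (fun q => [&& 0 <= q.2, in01 q.1.1 & in01 q.1.2]) x /\
  forall r : vecR R n, \sum_(q <- x | q.1.1 == r) q.2 = gmass G r.

Definition top_score (R : realType) (n : nat) (v : 'I_n -> R) (s : vecR R n) : R :=
  \big[Num.max/0]_(j : 'I_n) (v j * s j).

Definition winners (R : realType) (n : nat) (v : 'I_n -> R) (s : vecR R n) : {set 'I_n} :=
  [set i | v i * s i == top_score v s].

Definition price (R : realType) (n : nat) (v : 'I_n -> R) (s : vecR R n) (i : 'I_n) : R :=
  if s i == 0 then 0 else (\big[Num.max/0]_(j | j != i) (v j * s j)) / s i.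

Definition rev_at (R : realType) (n : nat) (v : 'I_n -> R) (r s : vecR R n) : R :=
  (#|winners v s|%:R)^-1 * \sum_(i in winners v s) r i * price v s i.

Definition revenue (R : realType) (n : nat) (v : 'I_n -> R) (x : infostruct R n) : R :=
  \sum_(q <- x) q.2 * rev_at v q.1.1 q.1.2.

Definition surplus (R : realType) (n : nat) (v : 'I_n -> R) (G : prior R n) : R :=
  \sum_(p <- G) p.2 * \big[Num.max/0]_(i : 'I_n) (v i * p.1 i).

Definition calibrated (R : realType) (n : nat) (x : infostruct R n) : Prop :=
  forall (i : 'I_n) (t : R),
    0 < \sum_(q <- x | q.1.2 i == t) q.2 ->
    (\sum_(q <- x | q.1.2 i == t) q.2 * q.1.1 i) / (\sum_(q <- x | q.1.2 i == t) q.2) = t.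

(* symmetric environment: (v_1 r_1, ..., v_n r_n) with r ~ G is exchangeable,
   i.e. its law is invariant under every permutation of the coordinates *)
Definition symmetric_env (R : realType) (n : nat) (v : 'I_n -> R) (G : prior R n) : Prop :=
  forall (sigma : {perm 'I_n}) (w : vecR R n),
    \sum_(p <- G | [ffun i => v i * p.1 i] == w) p.2 =
    \sum_(p <- G | [ffun i => v (sigma i) * p.1 (sigma i)] == w) p.2.

(* Main.v *)
Require Import Defs.
From HB Require Import structures.
From mathcomp Require Import all_boot all_order all_algebra all_fingroup.
From mathcomp Require Import reals zify ring lra.
Set Implicit Arguments. Unset Strict Implicit. Unset Printing Implicit Defensive.
Import Order.TTheory GRing.Theory Num.Theory.
Local Open Scope ring_scope.

Section Generic.
Variable R : realType.

Lemma part_lab (T : eqType) (idx : seq T) (lab : T -> nat) (P : pred T) (F : T -> R) :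
  \sum_(t <- idx | P t) F t =
  \sum_(l <- undup (map lab idx)) \sum_(t <- idx | P t && (lab t == l)) F t.
Proof.
rewrite -(exchange_big_dep xpredT) //=.
rewrite big_seq_cond [RHS]big_seq_cond; apply: eq_bigr => t /andP[tin _].
rewrite -big_filter.
have -> : [seq l <- undup [seq lab i | i <- idx] | lab t == l] = [:: lab t].
  rewrite (@eq_filter _ _ (pred1 (lab t))); last by move=> l /=; rewrite eq_sym.
  rewrite filter_pred1_uniq ?undup_uniq // mem_undup; exact: map_f.
by rewrite big_seq1.
Qed.

Lemma calib_gen (T : eqType) (idx : seq T) (wt rr : T -> R) (lab : T -> nat) (c : R) :
  let D l := \sum_(t <- idx | lab t == l) wt t in
  let N l := \sum_(t <- idx | lab t == l) wt t * rr t in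
  (forall l, D l = 0 -> N l = 0) ->
  \sum_(t <- idx | N (lab t) / D (lab t) == c) wt t * rr t =
  c * \sum_(t <- idx | N (lab t) / D (lab t) == c) wt t.
Proof.
move=> D N HDN.
have P1 := part_lab idx lab (fun t => N (lab t) / D (lab t) == c) (fun t => wt t * rr t).
have P2 := part_lab idx lab (fun t => N (lab t) / D (lab t) == c) wt.
simpl in P1, P2; rewrite P1 P2 mulr_sumr.
apply: eq_bigr => l _.
have E : forall F : T -> R, \sum_(t <- idx | (N (lab t) / D (lab t) == c) && (lab t == l)) F t
   = if N l / D l == c then \sum_(t <- idx | lab t == l) F t else 0.
  move=> F; case: ifP => Hc.
    apply: eq_bigl => t; case: (lab t =P l) => [->|_]; by rewrite ?Hc ?andbF.
  apply: big1 => t /andP[H1 /eqP H2]; by rewrite -H2 H1 in Hc.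
rewrite !E; case: eqP => [Hc|_]; last by rewrite mulr0.
rewrite -/(N l) -/(D l).
have [D0|Dn0] := eqVneq (D l) 0; first by rewrite D0 (HDN _ D0) mulr0.
by rewrite -Hc divfK.
Qed.

End Generic.

Definition sc (R : realType) n (v : 'I_n -> R) (r : vecR R n) : vecR R n := [ffun i => v i * r i].
Definition topv (R : realType) n (u : vecR R n) : R := \big[Num.max/0]_j u j.
Definition amax (R : realType) n (u : vecR R n) : {set 'I_n} := [set i | u i == topv u].
Definition wsh (R : realType) n (u : vecR R n) (j : 'I_n) : R :=
  if j \in amax u then (#|amax u|%:R)^-1 else 0.
Definition permv (R : realType) n (s : {perm 'I_n}) (u : vecR R n) : vecR R n := [ffun i => u (s i)].

Section Vecs.
Variables (R : realType) (n : nat).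
Implicit Types (u : vecR R n).

Lemma topv_perm s u : topv (permv s u) = topv u.
Proof.
rewrite /topv [RHS](reindex_inj (@perm_inj _ s)); apply: eq_bigr => i _; by rewrite ffunE.
Qed.

Lemma amax_perm s u : amax (permv s u) = s @^-1: amax u.
Proof. by apply/setP => i; rewrite !inE topv_perm ffunE. Qed.

Lemma wsh_perm s u j : wsh (permv s u) j = wsh u (s j).
Proof.
by rewrite /wsh amax_perm card_preimset ?inE //; exact: perm_inj.
Qed.

Lemma topv_ge0 u : 0 <= topv u.
Proof. exact: bigmax_ge_id. Qed.

Lemma topv_ge u j : u j <= topv u.
Proof. exact: le_bigmax. Qed.

Lemma amax_n0 u : (forall j, 0 <= u j) -> (0 < n)%N -> exists i, i \in amax u.
Proof.
move=> u0 n0; pose j0 : 'I_n := Ordinal n0.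
exists [arg max_(i > j0) u i]%O.
rewrite inE /topv (bigmax_eq_arg 0 j0) //.
Qed.

Lemma card_amax u : (forall j, 0 <= u j) -> (0 < n)%N -> (0 < #|amax u|)%N.
Proof. by move=> u0 n0; have [i Hi] := amax_n0 u0 n0; apply/card_gt0P; exists i. Qed.

Lemma sum_wsh u : (forall j, 0 <= u j) -> (0 < n)%N -> \sum_j wsh u j = 1.
Proof.
move=> u0 n0; rewrite /wsh -big_mkcond /= sumr_const.
have c0 := card_amax u0 n0.
by rewrite -[_ *+ _]mulr_natr mulVf // pnatr_eq0 -lt0n.
Qed.

Lemma sum_wsh_u u : (forall j, 0 <= u j) -> (0 < n)%N -> \sum_j u j * wsh u j = topv u.
Proof.
move=> u0 n0; rewrite /wsh.
rewrite (eq_bigr (fun j => if j \in amax u then topv u / #|amax u|%:R else 0)); last first.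
  move=> j _; case: ifP => [|_]; last by rewrite mulr0.
  by rewrite inE => /eqP ->.
rewrite -big_mkcond /= sumr_const.
have c0 := card_amax u0 n0.
by rewrite -[_ *+ _]mulr_natr divfK // pnatr_eq0 -lt0n.
Qed.

Lemma wsh_ge0 u j : 0 <= wsh u j.
Proof. rewrite /wsh; case: ifP => // _; by rewrite invr_ge0 ler0n. Qed.

Lemma wsh_le1 u j : wsh u j <= 1.
Proof.
rewrite /wsh; case: ifP => // H.
have c0 : (0 < #|amax u|)%N by apply/card_gt0P; exists j.
by rewrite invf_le1 ?ler1n // ltr0n.
Qed.

End Vecs.

Lemma group_sum (R : realType) (T I : eqType) (s : seq I) (w : I -> R) (h : I -> T)
   (F : T -> R) (U : seq T) :
  uniq U -> {in s, forall p, h p \in U} ->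
  \sum_(p <- s) w p * F (h p) = \sum_(u <- U) F u * \sum_(p <- s | h p == u) w p.
Proof.
move=> uU hU.
under [RHS]eq_bigr do rewrite mulr_sumr.
rewrite (exchange_big_dep xpredT) //=.
rewrite big_seq [RHS]big_seq; apply: eq_bigr => p pin.
rewrite -big_filter.
have -> : [seq u <- U | h p == u] = [:: h p].
  rewrite (@eq_filter _ _ (pred1 (h p))); last by move=> l /=; rewrite eq_sym.
  by rewrite filter_pred1_uniq // hU.
by rewrite big_seq1 mulrC.
Qed.

Section Sym.
Variables (R : realType) (n : nat) (v : 'I_n -> R) (G : prior R n).
Hypothesis Hsym : symmetric_env v G.

Lemma sym_sum (F : vecR R n -> R) (s : {perm 'I_n}) :
  \sum_(p <- G) p.2 * F (sc v p.1) = \sum_(p <- G) p.2 * F (permv s (sc v p.1)).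
Proof.
pose U := undup ([seq sc v p.1 | p <- G] ++ [seq permv s (sc v p.1) | p <- G]).
have uU : uniq U by exact: undup_uniq.
rewrite (@group_sum _ _ _ G (fun p => p.2) (fun p => sc v p.1) F U) //; last first.
  move=> p pG; rewrite mem_undup mem_cat; apply/orP; left; exact: (map_f (fun p : vecR R n * R => sc v p.1) pG).
rewrite (@group_sum _ _ _ G (fun p => p.2) (fun p => permv s (sc v p.1)) F U) //; last first.
  move=> p pG; rewrite mem_undup mem_cat; apply/orP; right; exact: (map_f (fun p : vecR R n * R => permv s (sc v p.1)) pG).
apply: eq_bigr => u _; congr (_ * _).
have -> := Hsym s u.
apply: eq_bigl => p /=.
have -> : permv s (sc v p.1) = [ffun i => v (s i) * p.1 (s i)].
  by apply/ffunP => i; rewrite !ffunE.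
by [].
Qed.

Lemma sym_j (F : 'I_n -> vecR R n -> R) :
  (forall (s : {perm 'I_n}) j u, F j (permv s u) = F (s j) u) ->
  forall j j', \sum_(p <- G) p.2 * F j (sc v p.1) = \sum_(p <- G) p.2 * F j' (sc v p.1).
Proof.
move=> HF j j'.
rewrite (sym_sum _ (tperm j j')); apply: eq_bigr => p _; by rewrite HF tpermL.
Qed.

End Sym.

Lemma sum_tri K : (\sum_(k <- iota 1 K) (K.+1 - k)).*2 = (K * K.+1)%N.
Proof.
elim: K => [|m IH]; first by rewrite big_nil.
rewrite (_ : iota 1 m.+1 = iota 1 m ++ [:: m.+1]); last by rewrite -(iotaD 1 m 1) addn1.
rewrite big_cat big_seq1 /=.
rewrite big_seq (eq_bigr (fun k => (m.+1 - k) + 1)%N); last first.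
  move=> k; rewrite mem_iota add1n ltnS => /andP[_ km].
  by rewrite addn1 subSn // ltnW.
rewrite -big_seq big_split /= sum1_size size_iota !doubleD IH subSnn.
lia.
Qed.

Section Constr.
Variables (R : realType) (n : nat) (v : 'I_n -> R) (G : prior R n) (K : nat).

Definition Wp (p : vecR R n * R) := amax (sc v p.1).

Definition aa (k : nat) : R :=
  if (0 < k <= K)%N then (K.+1 - k)%:R * (2 / (K * K.+1)%:R) else 0.

Definition idx : seq ((vecR R n * R) * nat * 'I_n) :=
  flatten [seq flatten [seq [seq ((p, k), i) | i <- enum (Wp p)] | k <- iota 1 K] | p <- G].

Definition wt (t : (vecR R n * R) * nat * 'I_n) : R := t.1.1.2 * aa t.1.2 / #|Wp t.1.1|%:R.
Definition lab (j : 'I_n) (t : (vecR R n * R) * nat * 'I_n) : nat :=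
  if t.2 == j then t.1.2.+1 else t.1.2.
Definition Dm j l := \sum_(t <- idx | lab j t == l) wt t.
Definition Nm j l := \sum_(t <- idx | lab j t == l) wt t * t.1.1.1 j.
Definition sig t : vecR R n := [ffun j => Nm j (lab j t) / Dm j (lab j t)].
Definition xs : infostruct R n := [seq ((t.1.1.1, sig t), wt t) | t <- idx].

Lemma idxP t : t \in idx -> [/\ t.1.1 \in G, t.1.2 \in iota 1 K & t.2 \in Wp t.1.1].
Proof.
case/flatten_mapP => p pG /flatten_mapP [k kin] /mapP [i iin ->] /=.
by split => //; rewrite mem_enum in iin.
Qed.

Lemma sum_idx (F : _ -> R) :
  \sum_(t <- idx) F t = \sum_(p <- G) \sum_(k <- iota 1 K) \sum_(i in Wp p) F ((p, k), i).
Proof.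
rewrite big_flatten big_map; apply: eq_bigr => p _.
rewrite big_flatten big_map; apply: eq_bigr => k _.
by rewrite big_map big_enum.
Qed.

Lemma aa_ge0 k : 0 <= aa k.
Proof.
rewrite /aa; case: ifP => // _; apply: mulr_ge0 => //.
by rewrite divr_ge0 // ler0n.
Qed.

Lemma aa_out k : ~~ (0 < k <= K)%N -> aa k = 0.
Proof. by rewrite /aa => /negbTE ->. Qed.

Lemma sum_iota_eq (f : nat -> R) l : (forall k, ~~ (0 < k <= K)%N -> f k = 0) ->
  \sum_(k <- iota 1 K) (k == l)%:R * f k = f l.
Proof.
move=> Hf; case: (boolP (l \in iota 1 K)) => Hl.
  rewrite (bigD1_seq l) ?iota_uniq //= eqxx mul1r big1 ?addr0 //.
  by move=> k /negbTE ->; rewrite mul0r.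
rewrite big_seq big1; last first.
  move=> k kin; case: eqP => [E|_]; last by rewrite mul0r.
  by rewrite -E kin in Hl.
rewrite Hf //; by rewrite mem_iota add1n ltnS in Hl.
Qed.

Lemma sum_iota_eqS (f : nat -> R) l : (forall k, ~~ (0 < k <= K)%N -> f k = 0) ->
  \sum_(k <- iota 1 K) (k.+1 == l)%:R * f k = f l.-1.
Proof.
move=> Hf; case: l => [|l].
  rewrite big1 ?Hf //= => k _; by rewrite mul0r.
by rewrite -(sum_iota_eq l Hf).
Qed.


Lemma sum_aa : (0 < K)%N -> \sum_(k <- iota 1 K) aa k = 1.
Proof.
move=> K0.
rewrite big_seq (eq_bigr (fun k => (K.+1 - k)%:R * (2 / (K * K.+1)%:R))); last first.
  by move=> k; rewrite mem_iota add1n ltnS => kin; rewrite /aa kin.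
rewrite -big_seq -mulr_suml -natr_sum.
have H : ((\sum_(k <- iota 1 K) (K.+1 - k))%:R * 2 = (K * K.+1)%:R :> R).
  by rewrite -sum_tri -muln2 natrM.
rewrite mulrA H divff // pnatr_eq0 muln_eq0 negb_or; apply/andP; split => //.
by rewrite -lt0n.
Qed.

Lemma sum_ind_in (A : {set 'I_n}) j (Y : R) :
  \sum_(i in A) (i == j)%:R * Y = (j \in A)%:R * Y.
Proof.
case: (boolP (j \in A)) => jA.
  rewrite (bigD1 j) //= eqxx mul1r big1 ?addr0 ?mul1r // => i /andP[_ /negbTE ->].
  by rewrite mul0r.
rewrite mul0r big1 // => i iA; case: eqP => [E|_]; last by rewrite mul0r.
by rewrite -E iA in jA.
Qed.

Lemma inner_sum (p : vecR R n * R) j l (X : R) : (0 < #|Wp p|)%N ->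
  \sum_(k <- iota 1 K) \sum_(i in Wp p)
     (if lab j ((p, k), i) == l then wt ((p, k), i) * X else 0) =
  p.2 * X * (aa l.-1 * wsh (sc v p.1) j + aa l * (1 - wsh (sc v p.1) j)).
Proof.
move=> W0.
have Wn0 : (#|Wp p|%:R : R) != 0 by rewrite pnatr_eq0 -lt0n.
have E1 : forall k, \sum_(i in Wp p)
     (if lab j ((p, k), i) == l then wt ((p, k), i) * X else 0) =
   (k == l)%:R * (p.2 * aa k * X) +
   wsh (sc v p.1) j * (((k.+1 == l)%:R - (k == l)%:R) * (p.2 * aa k * X)).
  move=> k.
  rewrite (eq_bigr (fun i => (k == l)%:R * (p.2 * aa k / #|Wp p|%:R * X) +
      (i == j)%:R * (((k.+1 == l)%:R - (k == l)%:R) * (p.2 * aa k / #|Wp p|%:R * X))));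
    last first.
    move=> i _; rewrite /lab /wt /=.
    by case: (i == j); case: (k.+1 == l); case: (k == l) => /=; ring.
  rewrite big_split /= sum_ind_in sumr_const.
  rewrite /wsh -/(Wp p); case: (boolP (j \in Wp p)) => jW /=.
    by rewrite mul1r -mulr_natr; field.
  by rewrite !mul0r !addr0 -mulr_natr; field.
under eq_bigr do rewrite E1.
rewrite big_split /= -mulr_sumr.
have Hf : forall k, ~~ (0 < k <= K)%N -> p.2 * aa k * X = 0.
  by move=> k Hk; rewrite aa_out // mulr0 mul0r.
rewrite (sum_iota_eq (f := fun k => p.2 * aa k * X)) //.
under eq_bigr do rewrite mulrBl.
rewrite big_split sumrN /= (sum_iota_eqS (f := fun k => p.2 * aa k * X)) //.
rewrite (sum_iota_eq (f := fun k => p.2 * aa k * X)) //.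
ring.
Qed.


Definition tn k : nat := if (0 < k <= K)%N then (K.+1 - k)%N else 0%N.
Definition cK : R := 2 / (K * K.+1)%:R.

Lemma aa_tn k : aa k = (tn k)%:R * cK.
Proof. by rewrite /aa /tn /cK; case: ifP => _; rewrite ?mul0r. Qed.

Lemma cK_gt0 : (0 < K)%N -> 0 < cK.
Proof. move=> K0; rewrite /cK divr_gt0 // ltr0n muln_gt0 K0 //. Qed.

Lemma tn_lc l : (0 < l <= K)%N -> (tn l.-1 * tn l.+1 < tn l * tn l)%N.
Proof.
move=> /andP[H1 H2]; rewrite /tn H1 H2 /=.
case: l H1 H2 => [//|l] _ H2 /=.
case: ifP => A; case: ifP => B; nia.
Qed.

Lemma tn_le1 k : (tn k <= tn 1)%N.
Proof. rewrite /tn; case: ifP => A; case: ifP => B //; lia. Qed.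

Lemma tn_dec l : (0 < l.-1)%N -> (tn l <= tn l.-1)%N.
Proof.
case: l => [//|l] /= H; rewrite /tn; case: ifP => A; case: ifP => B //; lia.
Qed.

Lemma tn_pos k : (0 < k <= K)%N -> (0 < tn k)%N.
Proof. move=> H; rewrite /tn H; case/andP: H => _ H; lia. Qed.

Lemma aa_1 : (0 < K)%N -> aa 1 = 2 / K.+1%:R.
Proof.
move=> K0; rewrite /aa K0 /= subSS subn0 natrM.
field; rewrite addrC natr1 !pnatr_eq0 /=; by rewrite -lt0n. 
Qed.
End Constr.

Lemma exists_other n (i : 'I_n) : (1 < n)%N -> exists j : 'I_n, j != i.
Proof.
move=> n2; have n0 : (0 < n)%N by exact: ltnW.
pose a : 'I_n := Ordinal n0; pose b : 'I_n := Ordinal n2.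
case: (eqVneq i a) => [->|ne]; last by exists a; rewrite eq_sym.
by exists b.
Qed.

Lemma rev_at_single (R : realType) n (v : 'I_n -> R) (r s : vecR R n) (i : 'I_n) (lo hi : R) :
  (1 < n)%N -> 0 <= lo -> lo < hi -> (forall j, v j * s j = if j == i then hi else lo) ->
  rev_at v r s = v i * r i * lo / hi.
Proof.
move=> n2 lo0 lohi H.
have hi0 : 0 < hi by exact: le_lt_trans lohi.
have top : top_score v s = hi.
  apply/le_anti/andP; split.
    apply: bigmax_le => [|j _]; first exact: ltW.
    by rewrite H; case: ifP => // _; exact: ltW.
  by have := le_bigmax 0 (fun j => v j * s j) i; rewrite H eqxx.
have W : winners v s = [set i].
  apply/setP => j; rewrite !inE H top.
  apply/idP/idP => [/eqP|/eqP ->]; last by rewrite eqxx.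
  by case: ifP => // _ E; rewrite E ltxx in lohi.
have Hi := H i; rewrite eqxx in Hi.
have si0 : s i != 0 by apply/eqP => E; rewrite E mulr0 in Hi; rewrite Hi ltxx in hi0.
have vi0 : v i != 0 by apply/eqP => E; rewrite E mul0r in Hi; rewrite Hi ltxx in hi0.
rewrite /rev_at W cards1 invr1 mul1r big_set1 /price (negbTE si0).
have [j' ji] := exists_other i n2.
have -> : \big[Num.max/0]_(j | j != i) (v j * s j) = lo.
  apply/le_anti/andP; split.
    by apply: bigmax_le => // j ji2; rewrite H (negbTE ji2).
  by apply: (bigmax_sup j') => //; rewrite H (negbTE ji).
rewrite -Hi; field; apply/andP; split => //.
Qed.

Lemma rev_at_equal (R : realType) n (v : 'I_n -> R) (r : vecR R n) (M : R) :
  (1 < n)%N -> 0 <= M -> (forall j, v j * r j = M) -> rev_at v r r = M.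
Proof.
move=> n2 M0 H.
have n0 : (0 < n)%N by exact: ltnW.
have top : top_score v r = M.
  apply/le_anti/andP; split.
    by apply: bigmax_le => // j _; rewrite H.
  by have := le_bigmax 0 (fun j => v j * r j) (Ordinal n0); rewrite H.
have W : winners v r = [set: 'I_n].
  by apply/setP => j; rewrite !inE H top eqxx.
rewrite /rev_at W cardsT card_ord.
rewrite (eq_bigr (fun _ => M)); last first.
  move=> i _; rewrite /price; case: (eqVneq (r i) 0) => [ri0|ri0].
    by rewrite ri0 mul0r; have := H i; rewrite ri0 mulr0.
  have [j' ji] := exists_other i n2.
  have -> : \big[Num.max/0]_(j | j != i) (v j * r j) = M.
    apply/le_anti/andP; split.
      by apply: bigmax_le => // j ji2; rewrite H.
    by apply: (bigmax_sup j') => //; rewrite H.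
  by field.
rewrite sumr_const cardsT card_ord -[M *+ n]mulr_natr.
have nn0 : (n%:R : R) != 0 by rewrite pnatr_eq0 -lt0n.
by field.
Qed.

Section Main.
Variables (R : realType) (n : nat) (v : 'I_n -> R) (G : prior R n).
Hypotheses (n2 : (1 < n)%N) (v0 : forall i, 0 <= v i) (HG : is_prior G)
  (Hsym : symmetric_env v G).

Lemma n0 : (0 < n)%N.
Proof. exact: ltnW. Qed.

Lemma pG_facts p : p \in G -> 0 <= p.2 /\ forall i, 0 <= p.1 i <= 1.
Proof.
move=> pG; have := allP HG.1 p pG => /andP[-> /forallP H]; split => //.
Qed.

Lemma sc_ge0 p : p \in G -> forall j, 0 <= sc v p.1 j.
Proof.
move=> pG j; rewrite ffunE; apply: mulr_ge0 => //.
by have [_ /(_ j) /andP[]] := pG_facts pG.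
Qed.

Lemma cardW p : p \in G -> (0 < #|Wp v p|)%N.
Proof. move=> pG; exact: card_amax (sc_ge0 pG) n0. Qed.

Definition PW j := \sum_(p <- G) p.2 * wsh (sc v p.1) j.
Definition AW j := \sum_(p <- G) p.2 * (p.1 j * wsh (sc v p.1) j).
Definition Tt j := \sum_(p <- G) p.2 * p.1 j.

Lemma sumG1 : \sum_(p <- G) p.2 = 1.
Proof. exact: HG.2. Qed.

Lemma sym_PW j j' : PW j = PW j'.
Proof.
rewrite /PW; apply: (@sym_j _ _ _ _ Hsym (fun j u => wsh u j)).
by move=> s k u; rewrite wsh_perm.
Qed.

Lemma sym_AW j j' : v j * AW j = v j' * AW j'.
Proof.
have E : forall k, v k * AW k = \sum_(p <- G) p.2 * (sc v p.1 k * wsh (sc v p.1) k).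
  move=> k; rewrite /AW mulr_sumr; apply: eq_bigr => p _; rewrite ffunE; ring.
rewrite !E; apply: (@sym_j _ _ _ _ Hsym (fun j u => u j * wsh u j)).
by move=> s k u; rewrite wsh_perm ffunE.
Qed.

Lemma sym_Tt j j' : v j * Tt j = v j' * Tt j'.
Proof.
have E : forall k, v k * Tt k = \sum_(p <- G) p.2 * sc v p.1 k.
  move=> k; rewrite /Tt mulr_sumr; apply: eq_bigr => p _; rewrite ffunE; ring.
rewrite !E; apply: (@sym_j _ _ _ _ Hsym (fun j u => u j)).
by move=> s k u; rewrite ffunE.
Qed.

Lemma sum_PW : \sum_j PW j = 1.
Proof.
rewrite /PW exchange_big /= -sumG1 big_seq [RHS]big_seq; apply: eq_bigr => p pG.
by rewrite -mulr_sumr sum_wsh ?mulr1 //; [exact: sc_ge0 | exact: n0].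
Qed.

Lemma sum_AW : \sum_j v j * AW j = surplus v G.
Proof.
rewrite /AW /surplus.
under eq_bigr do rewrite mulr_sumr.
rewrite exchange_big /= big_seq [RHS]big_seq; apply: eq_bigr => p pG.
rewrite (_ : \big[Num.max/0]_i (v i * p.1 i) = topv (sc v p.1)); last first.
  by rewrite /topv; apply: eq_bigr => i _; rewrite ffunE.
rewrite -(sum_wsh_u (sc_ge0 pG) n0) mulr_sumr; apply: eq_bigr => j _; rewrite ffunE; ring.
Qed.

Lemma surplus_ge0 : 0 <= surplus v G.
Proof.
rewrite /surplus big_seq sumr_ge0 // => p pG; apply: mulr_ge0; first by case: (pG_facts pG).
exact: bigmax_ge_id.
Qed.


Variable K : nat.

Lemma Dm_eq j l : Dm v G K j l = aa R K l.-1 * PW j + aa R K l * (1 - PW j).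
Proof.
rewrite /Dm big_mkcond sum_idx big_seq.
rewrite (eq_bigr (fun p => p.2 * 1 * (aa R K l.-1 * wsh (sc v p.1) j + aa R K l * (1 - wsh (sc v p.1) j)))); last first.
  move=> p pG; rewrite -(inner_sum K j l 1 (cardW pG)).
  by apply: eq_bigr => k _; apply: eq_bigr => i _; rewrite mulr1.
rewrite -big_seq /PW.
rewrite (eq_bigr (fun p => aa R K l.-1 * (p.2 * wsh (sc v p.1) j) + (aa R K l * p.2 - aa R K l * (p.2 * wsh (sc v p.1) j)))); last by move=> p _; ring.
rewrite big_split big_split /= sumrN -!mulr_sumr sumG1; ring.
Qed.

Lemma Nm_eq j l : Nm v G K j l = aa R K l.-1 * AW j + aa R K l * (Tt j - AW j).
Proof.
rewrite /Nm big_mkcond sum_idx big_seq.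
rewrite (eq_bigr (fun p : vecR R n * R => p.2 * p.1 j * (aa R K l.-1 * wsh (sc v p.1) j + aa R K l * (1 - wsh (sc v p.1) j)))); last first.
  move=> p pG; rewrite -(inner_sum K j l (p.1 j) (cardW pG)).
  by apply: eq_bigr => k _; apply: eq_bigr => i _.
rewrite -big_seq /AW /Tt.
rewrite (eq_bigr (fun p : vecR R n * R => aa R K l.-1 * (p.2 * (p.1 j * wsh (sc v p.1) j)) + (aa R K l * (p.2 * p.1 j) - aa R K l * (p.2 * (p.1 j * wsh (sc v p.1) j))))); last by move=> p _; ring.
rewrite big_split big_split /= sumrN -!mulr_sumr; ring.
Qed.


Definition j0 : 'I_n := Ordinal n0.
Definition al := PW j0.
Definition Av := v j0 * AW j0.
Definition mu := v j0 * Tt j0.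
Definition mm l := (aa R K l.-1 * Av + aa R K l * (mu - Av)) /
                   (aa R K l.-1 * al + aa R K l * (1 - al)).

Lemma score j t : v j * sig v G K t j = mm (lab j t).
Proof.
rewrite ffunE mulrA Nm_eq Dm_eq (sym_PW j j0) /mm -/al; congr (_ / _).
rewrite /Av /mu -(sym_AW j j0) -(sym_Tt j j0); ring.
Qed.

Lemma al_n : al * n%:R = 1.
Proof.
rewrite -[RHS]sum_PW (eq_bigr (fun _ => al)); last by move=> j _; rewrite /al (sym_PW j j0).
by rewrite sumr_const card_ord mulr_natr.
Qed.

Lemma Av_n : Av * n%:R = surplus v G.
Proof.
rewrite -[RHS]sum_AW (eq_bigr (fun _ => Av)); last by move=> j _; rewrite /Av (sym_AW j j0).
by rewrite sumr_const card_ord mulr_natr.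
Qed.

Lemma nR_gt0 : 0 < (n%:R : R).
Proof. by rewrite ltr0n n0. Qed.

Lemma al_gt0 : 0 < al.
Proof.
have H := nR_gt0.
have -> : al = n%:R^-1.
  by rewrite -[LHS](mulfK (lt0r_neq0 H)) al_n mul1r.
by rewrite invr_gt0.
Qed.

Lemma al_lt1 : al < 1.
Proof.
have H := nR_gt0.
have -> : al = n%:R^-1.
  by rewrite -[LHS](mulfK (lt0r_neq0 H)) al_n mul1r.
by rewrite invf_lt1 // ltr1n.
Qed.

Lemma Av_ge0 : 0 <= Av.
Proof.
rewrite /Av /AW mulr_ge0 // big_seq sumr_ge0 // => p pG.
have [p20 Hp] := pG_facts pG.
apply: mulr_ge0 => //; apply: mulr_ge0; last exact: wsh_ge0.
by case/andP: (Hp j0).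
Qed.

Lemma B_ge0 : 0 <= mu - Av.
Proof.
rewrite /mu /Av -mulrBr mulr_ge0 // /Tt /AW -sumrB big_seq sumr_ge0 // => p pG.
have [p20 Hp] := pG_facts pG.
rewrite -mulrBr mulr_ge0 // -[X in X - _]mulr1 -mulrBr mulr_ge0 //.
  by case/andP: (Hp j0).
by rewrite subr_ge0 wsh_le1.
Qed.

Lemma Av_al : Av / al = surplus v G.
Proof.
have H := nR_gt0.
have -> : al = n%:R^-1.
  by rewrite -[LHS](mulfK (lt0r_neq0 H)) al_n mul1r.
by rewrite invrK Av_n.
Qed.


Lemma topv_sc (p : vecR R n * R) : topv (sc v p.1) = \big[Num.max/0]_i (v i * p.1 i).
Proof. by apply: eq_bigr => i _; rewrite ffunE. Qed.

Lemma degen : surplus v G <= mu -> exists x : infostruct R n,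
  is_info_structure G x /\ calibrated x /\ surplus v G <= revenue v x.
Proof.
move=> Hd.
exists [seq ((p.1, p.1), p.2) | p <- G]; split; [split|split].
- apply/allP => q /mapP [p pG ->] /=; have [p20 Hp] := pG_facts pG.
  by apply/and3P; split => //; apply/forallP => i; exact: Hp.
- by move=> r; rewrite big_map.
- move=> j c; rewrite !big_map /= => Hpos.
  rewrite (eq_bigr (fun p => p.2 * c)); last by move=> p /eqP ->.
  by rewrite -mulr_suml mulrC mulKf // lt0r_neq0.
have Z : forall j p, p \in G -> p.2 * (topv (sc v p.1) - sc v p.1 j) = 0.
  move=> j.
  have F0 : forall p, p \in G -> 0 <= p.2 * (topv (sc v p.1) - sc v p.1 j).
    move=> p pG; have [p20 _] := pG_facts pG; by rewrite mulr_ge0 // subr_ge0 topv_ge.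
  have Hs : \sum_(p <- G | p \in G) p.2 * (topv (sc v p.1) - sc v p.1 j) = 0.
    apply/le_anti/andP; split; last exact: sumr_ge0.
    rewrite -big_seq.
    under eq_bigr do rewrite mulrBr.
    rewrite sumrB.
    have -> : \sum_(p <- G) p.2 * sc v p.1 j = mu.
      rewrite /mu -(sym_Tt j j0) /Tt mulr_sumr; apply: eq_bigr => p _; rewrite ffunE; ring.
    have -> : \sum_(p <- G) p.2 * topv (sc v p.1) = surplus v G.
      by apply: eq_bigr => p _; rewrite topv_sc.
    by rewrite subr_le0.
  move=> p pG; apply/eqP.
  have := psumr_eq0 G F0; rewrite Hs eqxx => /esym /allP /(_ p pG).
  by rewrite pG.
rewrite /revenue /surplus big_map /= big_seq [X in _ <= X]big_seq; apply: ler_sum => p pG.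
have [p20 Hp] := pG_facts pG.
case: (eqVneq p.2 0) => [->|p2n0]; first by rewrite !mul0r.
have E : forall j, v j * p.1 j = topv (sc v p.1).
  move=> j; have := Z j p pG; move/eqP; rewrite mulf_eq0 (negbTE p2n0) /= subr_eq0 ffunE.
  by move=> /eqP ->.
by rewrite (rev_at_equal n2 (topv_ge0 _) E) topv_sc.
Qed.

Hypothesis Hnd : mu < surplus v G.
Hypothesis K0 : (0 < K)%N.

Lemma Dpos : 0 < Av * (1 - al) - (mu - Av) * al.
Proof.
have E : (Av * (1 - al) - (mu - Av) * al) * n%:R = surplus v G - mu.
  transitivity (Av * n%:R - mu * (al * n%:R)); first by ring.
  by rewrite al_n mulr1 Av_n.
have : 0 < (Av * (1 - al) - (mu - Av) * al) * n%:R by rewrite E subr_gt0.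
by rewrite pmulr_lgt0 // nR_gt0.
Qed.

Lemma mu_gt0 : 0 < mu.
Proof.
have := Dpos; have := Av_ge0; have := B_ge0; have := al_gt0; have := al_lt1 => *.
nra.
Qed.

Lemma aa_lc l : (0 < l <= K)%N -> 0 < aa R K l * aa R K l - aa R K l.-1 * aa R K l.+1.
Proof.
move=> Hl; rewrite !aa_tn.
have -> : (tn K l)%:R * cK R K * ((tn K l)%:R * cK R K) - (tn K l.-1)%:R * cK R K * ((tn K l.+1)%:R * cK R K)
   = ((tn K l * tn K l)%:R - (tn K l.-1 * tn K l.+1)%:R) * (cK R K * cK R K) by rewrite !natrM; ring.
apply: mulr_gt0; first by rewrite subr_gt0 ltr_nat tn_lc.
by apply: mulr_gt0; apply: cK_gt0.
Qed.

Lemma den_pos l : (0 < l <= K)%N || (0 < l.-1 <= K)%N ->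
  0 < aa R K l.-1 * al + aa R K l * (1 - al).
Proof.
have := al_gt0; have := al_lt1 => H1 H2.
have := aa_ge0 R K l; have := aa_ge0 R K l.-1 => A0 A1.
case/orP => Hl.
  have : 0 < aa R K l by rewrite aa_tn mulr_gt0 ?ltr0n ?tn_pos ?cK_gt0.
  move=> *; nra.
have : 0 < aa R K l.-1 by rewrite aa_tn mulr_gt0 ?ltr0n ?tn_pos ?cK_gt0.
move=> *; nra.
Qed.

Lemma mm_lt l : (0 < l <= K)%N -> mm l < mm l.+1.
Proof.
move=> Hl.
have d1 := den_pos (l := l) (introT orP (or_introl Hl)).
have d2 : 0 < aa R K l.+1.-1 * al + aa R K l.+1 * (1 - al).
  by apply: den_pos; apply/orP; right.
rewrite /mm ltr_pdivrMr // mulrAC ltr_pdivlMr // -subr_gt0 /=.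
set a0 := aa R K l.-1; set a1 := aa R K l; set a2 := aa R K l.+1.
have -> : (a1 * Av + a2 * (mu - Av)) * (a0 * al + a1 * (1 - al)) -
   (a0 * Av + a1 * (mu - Av)) * (a1 * al + a2 * (1 - al)) =
   (a1 * a1 - a0 * a2) * (Av * (1 - al) - (mu - Av) * al) by ring.
by apply: mulr_gt0; [exact: aa_lc | exact: Dpos].
Qed.

Lemma mm_ge0 l : 0 <= mm l.
Proof.
have := al_gt0; have := al_lt1 => H1 H2.
rewrite /mm divr_ge0 //.
  by rewrite addr_ge0 // mulr_ge0 ?aa_ge0 ?Av_ge0 ?B_ge0.
by rewrite addr_ge0 // mulr_ge0 ?aa_ge0 // ?subr_ge0 ltW.
Qed.

Lemma mm_Kp1 : mm K.+1 = surplus v G.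
Proof.
rewrite /mm /= [aa R K K.+1]aa_out; last by rewrite ltnn andbF.
have aK : aa R K K != 0.
  by rewrite aa_tn mulf_neq0 // ?pnatr_eq0 -?lt0n ?tn_pos ?K0 ?leqnn // lt0r_neq0 // cK_gt0.
rewrite !mul0r !addr0 -Av_al; field; apply/andP; split => //.
exact: lt0r_neq0 al_gt0.
Qed.

Lemma mm_ge_mu l : (1 < l <= K.+1)%N -> mu <= mm l.
Proof.
move=> /andP[H1 H2].
have Hl : (0 < l.-1 <= K)%N by lia.
have d := den_pos (l := l) (introT orP (or_intror Hl)).
rewrite /mm ler_pdivlMr // -subr_ge0.
set a0 := aa R K l.-1; set a1 := aa R K l.
have -> : a0 * Av + a1 * (mu - Av) - mu * (a0 * al + a1 * (1 - al)) =
  (a0 - a1) * (Av * (1 - al) - (mu - Av) * al) by ring.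
apply: mulr_ge0; last exact: ltW Dpos.
rewrite subr_ge0 /a0 /a1 !aa_tn; apply: ler_wpM2r; first exact: ltW (cK_gt0 R K0).
rewrite ler_nat; apply: tn_dec; by case/andP: Hl.
Qed.

Definition cc := \sum_(k <- iota 1 K) aa R K k * (mm k / mm k.+1).

Lemma c_bound : surplus v G - surplus v G * cc <= 2 / K.+1%:R * surplus v G ^+ 2 / mu.
Proof.
have S0 := surplus_ge0.
have mu0 := mu_gt0.
have E1 : surplus v G - surplus v G * cc =
   surplus v G * \sum_(k <- iota 1 K) aa R K k * ((mm k.+1 - mm k) / mm k.+1).
  rewrite /cc -[X in X - _]mulr1 -(sum_aa R K0) -mulrBr -sumrB; congr (_ * _).
  rewrite big_seq [RHS]big_seq; apply: eq_bigr => k; rewrite mem_iota add1n ltnS => Hk.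
  have : 0 < mm k.+1 by apply: lt_le_trans (mm_ge_mu _); rewrite // ltnS.
  move=> m0; field; exact: lt0r_neq0.
have E2 : \sum_(k <- iota 1 K) aa R K k * ((mm k.+1 - mm k) / mm k.+1) <=
    \sum_(k <- iota 1 K) aa R K 1 / mu * (mm k.+1 - mm k).
  rewrite big_seq [X in _ <= X]big_seq; apply: ler_sum => k; rewrite mem_iota add1n ltnS => Hk.
  have m0 : mu <= mm k.+1 by apply: mm_ge_mu; rewrite ltnS.
  have x0 : 0 <= mm k.+1 - mm k by rewrite subr_ge0 ltW // mm_lt.
  have a0 := aa_ge0 R K k.
  have a1 : aa R K k <= aa R K 1.
    by rewrite !aa_tn; apply: ler_wpM2r; [exact: ltW (cK_gt0 R K0) | rewrite ler_nat tn_le1].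
  set x := mm k.+1 - mm k in x0 *; set y := mm k.+1 in m0 *.
  have y0 : 0 < y by exact: lt_le_trans m0.
  apply: (@le_trans _ _ (aa R K 1 * (x / y))).
    by apply: ler_wpM2r => //; rewrite divr_ge0 // ltW.
  rewrite mulrAC -mulrA; apply: ler_wpM2l; first exact: le_trans a1.
  apply: ler_wpM2l => //; rewrite lef_pV2 //.
have E3 : \sum_(k <- iota 1 K) aa R K 1 / mu * (mm k.+1 - mm k) <= aa R K 1 / mu * surplus v G.
  rewrite -mulr_sumr; apply: ler_wpM2l; first by rewrite divr_ge0 ?aa_ge0 // ltW.
  have -> : \sum_(k <- iota 1 K) (mm k.+1 - mm k) = mm K.+1 - mm 1.
    by have := telescope_sumr mm (leqnSn 0 : (1 <= K.+1)%N); rewrite /index_iota subSS subn0.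
  rewrite mm_Kp1 lerBlDr lerDl; exact: mm_ge0.
rewrite E1 (aa_1 R K0) in E2 E3 *.
have := ler_wpM2l S0 (le_trans E2 E3).
by move=> H; apply: le_trans H _; rewrite expr2 le_eqVlt; apply/orP; left; apply/eqP; field; rewrite lt0r_neq0 // addrC natr1 pnatr_eq0.
Qed.

Lemma wt_ge0 t : t \in idx v G K -> 0 <= wt v K t.
Proof.
move=> tin; have [pG _ _] := idxP tin; have [p20 _] := pG_facts pG.
by rewrite /wt mulr_ge0 ?mulr_ge0 ?aa_ge0 ?invr_ge0 ?ler0n.
Qed.

Lemma Nm_le j l : 0 <= Nm v G K j l <= Dm v G K j l.
Proof.
rewrite /Nm /Dm; apply/andP; split.
  rewrite big_seq_cond sumr_ge0 // => t /andP[tin _]; apply: mulr_ge0; first exact: wt_ge0.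
  have [pG _ _] := idxP tin; have [_ Hp] := pG_facts pG; by case/andP: (Hp j).
rewrite big_seq_cond [X in _ <= X]big_seq_cond; apply: ler_sum => t /andP[tin _].
apply: ler_piMr; first exact: wt_ge0.
have [pG _ _] := idxP tin; have [_ Hp] := pG_facts pG; by case/andP: (Hp j).
Qed.

Lemma sig01 t j : 0 <= sig v G K t j <= 1.
Proof.
rewrite ffunE; have /andP[N0 ND] := Nm_le j (lab j t).
have D0 : 0 <= Dm v G K j (lab j t) by exact: le_trans ND.
apply/andP; split; first exact: divr_ge0.
case: (eqVneq (Dm v G K j (lab j t)) 0) => [->|Dn0]; first by rewrite invr0 mulr0.
by rewrite ler_pdivrMr ?mul1r // lt_def Dn0.
Qed.

Lemma xs_info : is_info_structure G (xs v G K).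
Proof.
split.
  apply/allP => q /mapP [t tin ->] /=.
  have [pG kin iW] := idxP tin; have [p20 Hp] := pG_facts pG.
  apply/and3P; split; first exact: wt_ge0.
    by apply/forallP => i; exact: Hp.
  by apply/forallP => j; exact: sig01.
move=> r; rewrite big_map /= big_mkcond sum_idx /gmass [RHS]big_mkcond.
rewrite big_seq [RHS]big_seq; apply: eq_bigr => p pG /=.
have cW : (#|Wp v p|%:R : R) != 0 by rewrite pnatr_eq0 -lt0n cardW.
case: (p.1 == r).
  rewrite (eq_bigr (fun k => p.2 * aa R K k)); last first.
    by move=> k _; rewrite /wt /= sumr_const -mulr_natr; field.
  by rewrite -mulr_sumr sum_aa // mulr1.
by rewrite big1 // => k _; rewrite big1.
Qed.

Lemma xs_calib : calibrated (xs v G K).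
Proof.
move=> j c; rewrite !big_map /=.
under eq_bigl do rewrite ffunE.
under [X in X / _]eq_bigl do rewrite ffunE.
move=> Hpos; rewrite /Nm /Dm in Hpos *.
have H := @calib_gen R _ (idx v G K) (wt v K) (fun t => t.1.1.1 j) (lab j) c.
rewrite /= in H; rewrite H; first by rewrite mulfK // lt0r_neq0.
move=> l D0; have /andP[N0 ND] := Nm_le j l.
by apply/le_anti; rewrite N0 andbT; rewrite /Dm D0 in ND.
Qed.

Lemma xs_rev : revenue v (xs v G K) = surplus v G * cc.
Proof.
rewrite /revenue big_map /= sum_idx /surplus mulr_suml big_seq [RHS]big_seq.
apply: eq_bigr => p pG.
have cW : (#|Wp v p|%:R : R) != 0 by rewrite pnatr_eq0 -lt0n cardW.
set T := \big[Num.max/0]_i (v i * p.1 i).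
rewrite big_seq (eq_bigr (fun k => p.2 * T * (aa R K k * (mm k / mm k.+1)))); last first.
  move=> k; rewrite mem_iota add1n ltnS => Hk.
  rewrite (eq_bigr (fun _ => p.2 * aa R K k / #|Wp v p|%:R * (T * mm k / mm k.+1))).
    have m0 : mm k.+1 != 0 by apply: lt0r_neq0; apply: le_lt_trans (mm_lt _); [exact: mm_ge0 | by rewrite Hk].
    rewrite sumr_const -[_ *+ #|_|]mulr_natr; field; by rewrite cW m0.
  move=> i iW /=.
  rewrite (@rev_at_single _ _ _ _ _ i (mm k) (mm k.+1)) //.
  - have : v i * p.1 i = T.
      by move: iW; rewrite /Wp inE ffunE /topv => /eqP ->; apply: eq_bigr => j _; rewrite ffunE.
    by move=> ->; rewrite /wt /= mulrA.
  - exact: mm_ge0.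
  - exact: mm_lt.
  - move=> j; rewrite score /lab /=.
    by case: ifP => [/eqP ->|/negbT ne]; rewrite ?eqxx // eq_sym (negbTE ne).
by rewrite -mulr_sumr /cc [in RHS]big_seq.
Qed.
End Main.

Unset Implicit Arguments.
Set Strict Implicit.
Theorem mainTheorem3 (R : realType) (n : nat) (v : 'I_n -> R) (G : prior R n) :
  (2 <= n)%N ->
  (forall i, 0 <= v i) ->
  is_prior G ->
  symmetric_env v G ->
  forall eps : R, 0 < eps ->
  exists x : infostruct R n,
    is_info_structure G x /\ calibrated x /\ surplus v G - eps <= revenue v x.
Proof.
move=> n2 v0 HG Hsym eps eps0.
have [Hd|Hnd] := lerP (surplus v G) (mu v G n2).
  have [x [H1 [H2 H3]]] := degen HG Hsym Hd.
  exists x; split => //; split => //.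
  by apply: le_trans H3; rewrite lerBlDr lerDl ltW.
have m0 := mu_gt0 v0 HG Hsym Hnd.
set S := surplus v G in Hnd *; set m := mu v G n2 in Hnd m0 *.
set C := 2 * S ^+ 2 / (m * eps).
have C0 : 0 <= C by rewrite /C; apply: divr_ge0; [apply: mulr_ge0 => //; exact: sqr_ge0 | apply: ltW; exact: mulr_gt0].
have HK := archi_boundP C0; set K := Num.Def.archi_bound C in HK.
have K0 : (0 < K)%N by rewrite lt0n; apply/negP => /eqP E; rewrite E in HK; rewrite ltNge C0 in HK.
exists (xs v G K); split; first exact: xs_info.
split; first exact: xs_calib.
rewrite (xs_rev v0 HG Hsym Hnd K0).
have cb := c_bound v0 HG Hsym Hnd K0.
have hX : 2 / K.+1%:R * S ^+ 2 / m <= eps.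
  have -> : 2 / K.+1%:R * S ^+ 2 / m = (C / K.+1%:R) * eps.
    rewrite /C; field; apply/and3P; split; [by rewrite addrC natr1 pnatr_eq0 | exact: lt0r_neq0 | exact: lt0r_neq0].
  apply: ler_piMl; first exact: ltW.
  rewrite ler_pdivrMr ?mul1r ?ltr0n //; apply: le_trans (ltW HK) _; by rewrite ler_nat.
move: cb hX; rewrite -/S -/m => cb hX; move: (le_trans cb hX); move: (S * cc v G n2 K) => Y H; lra.
Qed.
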